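(* Let $K,F,Z,S,u$ be positive integers and let $\mathbf{P}$ be a $(K,F,Z,S)$ placement delivery array (PDA). Then the $F\times uK$ array $[\mathbf{P}\,|\,\mathbf{P}\,|\,\cdots\,|\,\mathbf{P}]$ obtained by placing $u$ copies of $\mathbf{P}$ side by side is a $(uK,u,F,Z,S)$ EPDA.
   Context: Notation: $[n]=\{1,\dots,n\}$. PDA: an $F\times K$ array $\mathbf{P}=[p_{j,k}]$ with entries either a symbol $\star$ or integers in $[S]$ is a $(K,F,Z,S)$ PDA if: (D1) $\star$ appears exactly $Z$ times in each column; (D2) each integer in $[S]$ occurs at least once; (D3) for any two distinct entries with $p_{j_1,k_1}=p_{j_2,k_2}=s$ an integer, we have $j_1\neq j_2$, $k_1\neq k_2$, and $p_{j_1,k_2}=p_{j_2,k_1}=\star$. EPDA: an $F\times K$ array $\mathbf{A}=[a_{j,k}]$ with entries either $\star$ or integers in $[S]$ is a $(K,L,F,Z,S)$ EPDA (where $L\le K$ is a positive integer) if: (C1) $\star$ appears exactly $Z$ times in each column; (C2) every integer in $[S]$ occurs at least once; (C3) no integer appears more than once in any column; (C4) for each $s\in[S]$, letting $\mathbf{A}^{(s)}$ be the subarray obtained by deleting all rows and columns of $\mathbf{A}$ not containing $s$, no row of $\mathbf{A}^{(s)}$ contains more than $L$ integer entries. *)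

(* Defs.v *)
From mathcomp Require Import all_boot.
Set Implicit Arguments. Unset Strict Implicit. Unset Printing Implicit Defensive.

(* An F x K array with entries star (None) or integers (Some s). *)
Definition array (F K : nat) := 'I_F -> 'I_K -> option nat.

Definition is_int (e : option nat) : bool := if e is Some _ then true else false.

Definition is_PDA (K F Z S : nat) (P : array F K) : Prop :=
  (forall j k s, P j k = Some s -> 1 <= s <= S) /\
  (forall k : 'I_K, #|[set j : 'I_F | P j k == None]| = Z) /\
  (forall s, 1 <= s <= S -> exists j k, P j k = Some s) /\
  (forall (j1 j2 : 'I_F) (k1 k2 : 'I_K) s,
      (j1, k1) <> (j2, k2) -> P j1 k1 = Some s -> P j2 k2 = Some s ->
      [/\ j1 <> j2, k1 <> k2, P j1 k2 = None & P j2 k1 = None]).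

Definition is_EPDA (K L F Z S : nat) (A : array F K) : Prop :=
  (0 < L <= K) /\
  (forall j k s, A j k = Some s -> 1 <= s <= S) /\
  (forall k : 'I_K, #|[set j : 'I_F | A j k == None]| = Z) /\
  (forall s, 1 <= s <= S -> exists j k, A j k = Some s) /\
  (forall (k : 'I_K) (j1 j2 : 'I_F) s,
      A j1 k = Some s -> A j2 k = Some s -> j1 = j2) /\
  (* C4: in the subarray A^(s) (rows and columns containing s), each row has
     at most L integer entries *)
  (forall s (j : 'I_F), (exists k, A j k = Some s) ->
      #|[set k : 'I_K | [exists j', A j' k == Some s] && is_int (A j k)]| <= L).

(* [P | P | ... | P] with u copies: column k of the result is column k mod K of P *)
Definition hrep (F K u : nat) (HK : 0 < K) (P : array F K) : array F (u * K) :=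
  fun j k => P j (Ordinal (ltn_pmod (nat_of_ord k) HK)).
Arguments is_PDA K F Z S P : clear implicits.
Arguments is_EPDA K L F Z S A : clear implicits.
Arguments hrep {F K} u HK P.

(* Main.v *)
Require Import Defs.
From mathcomp Require Import all_boot.
From mathcomp Require Import zify.

Lemma divlt K u (HK : 0 < K) (k : 'I_(u * K)) : k %/ K < u.
Proof. by rewrite ltn_divLR // ltn_ord. Qed.

Theorem corollary1 (K F Z S u : nat) (HK : 0 < K) (HF : 0 < F) (HZ : 0 < Z)
  (HS : 0 < S) (Hu : 0 < u) (P : array F K) :
  is_PDA K F Z S P -> is_EPDA (u * K) u F Z S (hrep u HK P).
Proof.
move=> [Hr [D1 [D2 D3]]].
rewrite /is_EPDA /hrep.
split; first by rewrite Hu /= leq_pmulr.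
split; first by move=> j k s; apply: Hr.
split; first by move=> k; apply: D1.
split.
  move=> s /D2 [j [k Hk]].
  have hk : k < u * K by apply: leq_trans (ltn_ord k) (leq_pmull _ Hu).
  exists j, (Ordinal hk).
  set o := Ordinal _.
  suff -> : o = k by [].
  by apply: val_inj; rewrite /= modn_small.
split.
  move=> k j1 j2 s H1 H2.
  case: (eqVneq j1 j2) => // Hne.
  have [] := D3 _ _ _ _ s _ H1 H2; first by move=> [] /eqP; rewrite (negbTE Hne).
  by [].
move=> s j [k0 Hk0].
pose f (k : 'I_(u * K)) : 'I_u := @Ordinal u (k %/ K) (@divlt K u HK k).
apply: leq_trans (_ : #|f @: [set k : 'I_(u * K) | [exists j', hrep u HK P j' k == Some s] && is_int (hrep u HK P j k)]| <= u).
  rewrite card_in_imset //.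
  move=> k1 k2; rewrite !inE /hrep => /andP [/existsP [j1 /eqP H1] I1] /andP [/existsP [j2 /eqP H2] I2] /(congr1 val) /= Hq.
  set o0 := Ordinal (ltn_pmod k0 HK) in Hk0.
  have Hsame : forall (k : 'I_(u*K)) j', P j' (Ordinal (ltn_pmod k HK)) = Some s ->
      is_int (P j (Ordinal (ltn_pmod k HK))) -> k %% K = k0 %% K.
    move=> k j' Hj' Ik.
    case: (eqVneq (Ordinal (ltn_pmod k HK)) o0) => [/(congr1 val) //|Hne].
    have [_ Hne2 _ Hn] := D3 j' j _ _ s (fun e => negP Hne (introT eqP (f_equal snd e))) Hj' Hk0.
    by rewrite Hn in Ik.
  have E1 := Hsame _ _ H1 I1.
  have E2 := Hsame _ _ H2 I2.
  apply: val_inj => /=.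
  by rewrite (divn_eq k1 K) (divn_eq k2 K) Hq E1 E2.
by rewrite -[u in _ <= u]card_ord max_card.
Qed.
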